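(* For $n=5$ leaves, any two quartet-matched pairs of binary trees $T_1,T_2$ and $T_3,T_4$ satisfy $\{T_1,T_2\}=\{T_3,T_4\}$. For $n=6$ leaves, every quartet-matched pair with $\{T_1,T_2\}\neq\{T_3,T_4\}$ is equivalent, up to the action of the symmetric group $\mathfrak{S}_6$ on leaf labels, to the pairs $T_1=\{12|3456,\,123|456,\,1234|56\}$, $T_2=\{13|2456,\,123|456,\,1235|46\}$, $T_3=\{13|2456,\,123|456,\,1234|56\}$, $T_4=\{12|3456,\,123|456,\,1235|46\}$.
   Context: Trees are unrooted binary trees with leaves labelled bijectively by $[n]$, described by their sets of nontrivial splits. For $Q\subseteq[n]$, $T|_Q$ denotes the induced subtree on leaf set $Q$. For trees $T_i,T_j$, $\mathcal{Q}(T_i,T_j)$ denotes the multiset of all quartet trees $T_i|_Q$ and $T_j|_Q$ for all four-element $Q\subseteq[n]$. Two pairs of trees $T_1,T_2$ and $T_3,T_4$ are quartet-matched if $\mathcal{Q}(T_1,T_2)=\mathcal{Q}(T_3,T_4)$. *)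

(* Defs.v *)
From mathcomp Require Import all_boot all_fingroup.
Set Implicit Arguments. Unset Strict Implicit. Unset Printing Implicit Defensive.

(* Leaves are labelled by 'I_n (label k of the paper is the ordinal k-1).
   A split of a leaf set X is the unordered pair {A, B} of its two parts,
   represented as a set of two sets of leaves.  A tree is its set of
   nontrivial splits. *)
Notation split_t n := {set {set 'I_n}}.
Notation tree_t n := {set {set {set 'I_n}}}.

Definition is_nt_split n (X : {set 'I_n}) (s : split_t n) : bool :=
  [exists A : {set 'I_n}, exists B : {set 'I_n},
     [&& s == [set A; B], [disjoint A & B], A :|: B == X,
         1 < #|A| & 1 < #|B| ]].

Definition compatible n (s1 s2 : split_t n) : bool :=
  [exists A in s1, exists B in s2, [disjoint A & B]].

(* unrooted binary tree on leaf set [n], described by its set of nontrivial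
   splits: a pairwise compatible set of nontrivial splits of [n] of maximal
   size n - 3 (Buneman's splits-equivalence theorem) *)
Definition is_binary_tree n (T : tree_t n) : bool :=
  [&& [forall s in T, is_nt_split [set: 'I_n] s],
      [forall s1 in T, forall s2 in T, compatible s1 s2]
    & #|T| == n - 3].

Definition restrict n (T : tree_t n) (Q : {set 'I_n}) : tree_t n :=
  [set [set A :&: Q | A : {set 'I_n} in s] | s : split_t n in T
       & is_nt_split Q [set A :&: Q | A : {set 'I_n} in s]].

Definition quartets n : seq {set 'I_n} := enum [set Q : {set 'I_n} | #|Q| == 4].

(* the multiset Q(Ti, Tj), as a sequence up to permutation *)
Definition quartet_multiset n (Ti Tj : tree_t n) : seq (tree_t n) :=
  [seq restrict Ti Q | Q <- quartets n] ++ [seq restrict Tj Q | Q <- quartets n].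

Definition quartet_matched n (T1 T2 T3 T4 : tree_t n) : Prop :=
  perm_eq (quartet_multiset T1 T2) (quartet_multiset T3 T4).

Definition upair_eq (U : Type) (a b c d : U) : Prop :=
  (a = c /\ b = d) \/ (a = d /\ b = c).

Definition relabel n (s : {perm 'I_n}) (T : tree_t n) : tree_t n :=
  [set [set s @: A | A : {set 'I_n} in sp] | sp : split_t n in T].

Definition mk_split n (A : {set 'I_n}) : split_t n := [set A; ~: A].

Definition L6 (k : nat) : 'I_6 := inord k.-1.

Definition T1_6 : tree_t 6 :=
  [set mk_split [set L6 1; L6 2]; mk_split [set L6 1; L6 2; L6 3];
       mk_split [set L6 1; L6 2; L6 3; L6 4]].
Definition T2_6 : tree_t 6 :=
  [set mk_split [set L6 1; L6 3]; mk_split [set L6 1; L6 2; L6 3];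
       mk_split [set L6 1; L6 2; L6 3; L6 5]].
Definition T3_6 : tree_t 6 :=
  [set mk_split [set L6 1; L6 3]; mk_split [set L6 1; L6 2; L6 3];
       mk_split [set L6 1; L6 2; L6 3; L6 4]].
Definition T4_6 : tree_t 6 :=
  [set mk_split [set L6 1; L6 2]; mk_split [set L6 1; L6 2; L6 3];
       mk_split [set L6 1; L6 2; L6 3; L6 5]].

Definition same_config n (U1 U2 U3 U4 V1 V2 V3 V4 : tree_t n) : Prop :=
  (upair_eq U1 U2 V1 V2 /\ upair_eq U3 U4 V3 V4) \/
  (upair_eq U1 U2 V3 V4 /\ upair_eq U3 U4 V1 V2).

(* Main.v *)
Require Import Defs.
From mathcomp Require Import all_boot all_fingroup.
Set Implicit Arguments. Unset Strict Implicit. Unset Printing Implicit Defensive.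

Lemma ex_set2 (T : finType) (a b : T) (P : pred T) :
  [exists x in [set a; b], P x] = P a || P b.
Proof.
apply/idP/idP.
- by case/existsP=> x /andP[/set2P [->|->] Px]; rewrite Px ?orbT.
- case/orP=> H; apply/existsP; [exists a | exists b]; by rewrite ?set21 ?set22 H.
Qed.

Lemma set2C (T : finType) (a b : T) : [set a; b] = [set b; a].
Proof. by apply/setP=> x; rewrite !inE orbC. Qed.

Lemma set2_union (T : finType) (X Y X' Y' : {set T}) :
  [set X; Y] = [set X'; Y'] -> X :|: Y = X' :|: Y'.
Proof.
move=> E; apply/setP=> z.
have h1 := ex_set2 X Y (fun Z => z \in Z); have h2 := ex_set2 X' Y' (fun Z => z \in Z).
simpl in h1, h2. by rewrite !inE -h1 -h2 E.
Qed.

Fixpoint eqbl (a b : seq bool) : bool :=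
  match a, b with
  | x :: a', y :: b' => if x then (if y then eqbl a' b' else false)
                        else (if y then false else eqbl a' b')
  | [::], [::] => true
  | _, _ => false
  end.

Lemma eqblE a b : eqbl a b = (a == b).
Proof. by elim: a b => [|x a IH] [|y b] //=; rewrite eqseq_cons IH; case: x; case: y. Qed.

Fixpoint eqvl (a b : seq (seq bool)) : bool :=
  match a, b with
  | x :: a', y :: b' => if eqbl x y then eqvl a' b' else false
  | [::], [::] => true
  | _, _ => false
  end.

Lemma eqvlE a b : eqvl a b = (a == b).
Proof. by elim: a b => [|x a IH] [|y b] //=; rewrite eqseq_cons IH eqblE; case: (x == y). Qed.

Fixpoint hasl (T : Type) (p : T -> bool) (s : seq T) : bool :=
  if s is x :: s' then (if p x then true else hasl p s') else false.

Lemma haslE (T : Type) (p : T -> bool) s : hasl p s = has p s.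
Proof. by elim: s => //= x s ->; case: (p x). Qed.

Section Codes.
Variable n : nat.
Definition S (c : seq bool) : {set 'I_n} := [set i : 'I_n | nth false c i].
Definition enc (A : {set 'I_n}) : seq bool := [seq i \in A | i <- enum 'I_n].
Definition cnt (c : seq bool) := count (nth false c) (iota 0 n).
Definition andl (c d : seq bool) := mkseq (fun i => nth false c i && nth false d i) n.
Definition negl (c : seq bool) := mkseq (fun i => ~~ nth false c i) n.

Lemma size_enc A : size (enc A) = n.
Proof. by rewrite size_map size_enum_ord. Qed.

Lemma S_enc A : S (enc A) = A.
Proof.
apply/setP=> i; rewrite inE /enc (nth_map i) ?size_enum_ord ?ltn_ord //.
by rewrite nth_ord_enum.
Qed.

Lemma nth_enc A i (lt : i < n) : nth false (enc A) i = (Ordinal lt \in A).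
Proof. by have := S_enc A => /setP/(_ (Ordinal lt)); rewrite inE. Qed.

Lemma card_S c : #|S c| = cnt c.
Proof.
rewrite cardE /enum_mem size_filter -enumT /cnt -val_enum_ord count_map.
by apply: eq_count => i; rewrite /= inE.
Qed.

Lemma S_inj c d : size c = n -> size d = n -> S c = S d -> c = d.
Proof.
move=> sc sd /setP E; apply: (@eq_from_nth _ false); rewrite ?sc ?sd // => i lt.
by have := E (Ordinal lt); rewrite !inE.
Qed.

Lemma S_neg c : S (negl c) = ~: S c.
Proof. by apply/setP=> i; rewrite !inE nth_mkseq. Qed.

Lemma S_and c d : S (andl c d) = S c :&: S d.
Proof. by apply/setP=> i; rewrite !inE nth_mkseq. Qed.

Lemma size_andl c d : size (andl c d) = n. Proof. exact: size_mkseq. Qed.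
Lemma size_negl c : size (negl c) = n. Proof. exact: size_mkseq. Qed.

Definition disjc c d := cnt (andl c d) == 0.
Lemma S_disj c d : [disjoint S c & S d] = disjc c d.
Proof. by rewrite -setI_eq0 -S_and -cards_eq0 card_S. Qed.

Definition compc c d :=
  [|| disjc c d, disjc c (negl d), disjc (negl c) d | disjc (negl c) (negl d)].

Lemma compatible_S c d : compatible (mk_split (S c)) (mk_split (S d)) = compc c d.
Proof.
rewrite /compatible /mk_split.
have h := ex_set2 (S c) (~: S c) (fun A => [exists B in [set S d; ~: S d], [disjoint A & B]]).
simpl in h; rewrite h !ex_set2 -!S_neg !S_disj /compc; by rewrite !orbA.
Qed.

Lemma mk_splitC A : mk_split (~: A) = mk_split A :> split_t n.
Proof. by rewrite /mk_split setCK set2C. Qed.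

Lemma mk_split_neg c : mk_split (S (negl c)) = mk_split (S c).
Proof. by rewrite S_neg mk_splitC. Qed.

Definition tree_of (l : seq (seq bool)) : tree_t n :=
  [set s in map (fun c => mk_split (S c)) l].

Definition eqtree (l1 l2 : seq (seq bool)) :=
  all (fun c => has (fun d => eqbl c d || eqbl c (negl d)) l2) l1 &&
  all (fun c => has (fun d => eqbl c d || eqbl c (negl d)) l1) l2.

Lemma eqtree_tree l1 l2 : eqtree l1 l2 -> tree_of l1 = tree_of l2.
Proof.
case/andP=> /allP h1 /allP h2; apply/setP=> s; rewrite !inE.
apply/mapP/mapP=> [[c cl ->]|[c cl ->]].
- case/hasP: (h1 c cl) => d dl; rewrite !eqblE => /orP[]/eqP->; exists d => //; by rewrite mk_split_neg.
- case/hasP: (h2 c cl) => d dl; rewrite !eqblE => /orP[]/eqP->; exists d => //; by rewrite mk_split_neg.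
Qed.

End Codes.

Lemma perm_inj_in (T1 T2 : eqType) (f : T1 -> T2) (D : pred T1) s1 s2 :
  {in D &, injective f} -> all D s1 -> all D s2 ->
  perm_eq (map f s1) (map f s2) -> perm_eq s1 s2.
Proof.
move=> inj /allP d1 /allP d2 /seq.permP pe; apply/allP=> x; rewrite mem_cat => xs.
have Dx : D x by case/orP: xs => [/d1|/d2].
have h s : {subset s <= D} -> count_mem x s = count (pred1 (f x)) (map f s).
  move=> sD; rewrite count_map; apply: eq_in_count => y ys /=.
  apply/eqP/eqP => [->//|]; move=> e; exact: inj (sD _ ys) Dx e.
by rewrite /= (h s1) // (h s2) // pe.
Qed.

Lemma two_multiset (T : eqType) (a b c d : T) :
  (forall x, (a == x) + (b == x) = (c == x) + (d == x)) ->
  c \in [:: a; b] /\ d = (if c == a then b else a).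
Proof.
move=> h; have hc := h c; rewrite eqxx in hc.
case ca: (c == a).
- move/eqP: ca => ca; subst c; split; first by rewrite mem_head.
  have hb := h b; rewrite eqxx in hb; move/addnI: hb.
  by case: eqP.
- rewrite (eq_sym a c) ca /= in hc.
  have cb : b == c by move: hc; case: (b == c).
  split; first by rewrite !inE ca eq_sym cb.
  have ha := h a; rewrite eqxx ca in ha.
  by move: ha; case: (d =P a) => // _; case: (b == a).
Qed.

Fixpoint ok3 (v1 v2 v3 : seq (seq bool)) : bool :=
  match v1, v2, v3 with
  | a :: v1', b :: v2', c :: v3' => if eqbl c a || eqbl c b then ok3 v1' v2' v3' else false
  | [::], [::], [::] => true
  | _, _, _ => false
  end.

Fixpoint v4f (v1 v2 v3 : seq (seq bool)) : seq (seq bool) :=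
  match v1, v2, v3 with
  | a :: v1', b :: v2', c :: v3' => (if eqbl c a then b else a) :: v4f v1' v2' v3'
  | _, _, _ => [::]
  end.

Lemma ok3_map (T : eqType) (f g h : T -> seq bool) s :
  (forall q, q \in s -> h q \in [:: f q; g q]) -> ok3 (map f s) (map g s) (map h s).
Proof.
elim: s => [|q s IH] H //=.
have E : (h q == f q) || (h q == g q).
  by have := H q (mem_head _ _); rewrite !inE.
rewrite !eqblE E; apply: IH => x xs; apply: H; by rewrite inE xs orbT.
Qed.

Lemma v4f_map (T : Type) (f g h : T -> seq bool) s :
  v4f (map f s) (map g s) (map h s) = map (fun q => if h q == f q then g q else f q) s.
Proof. by elim: s => //= q s ->; rewrite eqblE. Qed.
Section Struct.
Variable n : nat.

Definition okc (c : seq bool) :=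
  [&& size c == n, ~~ nth false c 0, 1 < cnt n c & 1 < cnt n (negl n c)].

Definition good (l : seq (seq bool)) :=
  [&& uniq l, all okc l & all (fun c => all (compc n c) l) l].

Lemma nt_split_full (s : split_t n) : is_nt_split [set: 'I_n] s ->
  exists A, s = mk_split A /\ 1 < #|A| /\ 1 < #|~: A|.
Proof.
case/existsP=> A /existsP [B /and5P[/eqP-> dAB /eqP UAB cA cB]].
have eB: B = ~: A.
  apply/setP=> x; rewrite inE; have: x \in A :|: B by rewrite UAB inE.
  rewrite inE; case xA: (x \in A) => /= xB; last by rewrite xB.
  apply/negP => xB'; move: dAB; rewrite disjoint_subset => /subsetP/(_ x xA).
  by rewrite inE xB'.
by exists A; rewrite /mk_split -eB.
Qed.

Lemma split_code (s : split_t n) : is_nt_split [set: 'I_n] s ->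
  exists c, s = mk_split (S n c) /\ okc c.
Proof.
case/nt_split_full=> A [-> [cA cA']].
case: (ltnP 0 n) => n0; last first.
  exists (enc A); rewrite S_enc /okc size_enc eqxx nth_default ?size_enc //=.
  by rewrite -!card_S S_neg S_enc cA cA'.
case h: (nth false (enc A) 0).
- exists (enc (~: A)); rewrite S_enc mk_splitC /okc size_enc eqxx /=.
  rewrite (nth_enc _ n0) in h; rewrite (nth_enc _ n0) inE h /=.
  by rewrite -!card_S S_neg !S_enc setCK cA cA'.
- exists (enc A); rewrite S_enc /okc size_enc eqxx h /=.
  by rewrite -!card_S S_neg !S_enc cA cA'.
Qed.

Lemma seq_codes (e : seq (split_t n)) :
  (forall s, s \in e -> is_nt_split [set: 'I_n] s) ->
  exists l, e = map (fun c => mk_split (S n c)) l /\ all okc l.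
Proof.
elim: e => [|s e IH] H; first by exists [::].
have [c [-> okc_c]] := split_code (H s (mem_head _ _)).
have [l [-> okl]] := IH (fun x xe => H x (mem_behead (s := s :: e) xe)).
by exists (c :: l); rewrite /= okc_c.
Qed.

Lemma binary_codes (T : tree_t n) : is_binary_tree T ->
  exists l, T = tree_of n l /\ size l = n - 3 /\ good l.
Proof.
case/and3P=> /forall_inP Hs /forall_inP Hc /eqP cT.
have Hs' : forall s, s \in enum T -> is_nt_split [set: 'I_n] s.
  by move=> s; rewrite mem_enum; apply: Hs.
have [l [el okl]] := seq_codes Hs'.
have Tl : T = tree_of n l.
  by apply/setP=> s; rewrite inE -el mem_enum.
exists l; split=> //; split.
  by rewrite -(size_map (fun c => mk_split (S n c))) -el -cardE.
rewrite /good okl /=; apply/andP; split.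
  by apply: (map_uniq (f := fun c => mk_split (S n c))); rewrite -el enum_uniq.
apply/allP=> c cl; apply/allP=> d dl.
rewrite -compatible_S.
have mT x : x \in l -> mk_split (S n x) \in T.
  by move=> xl; rewrite Tl inE; apply: (map_f (fun c => mk_split (S n c))).
by have /forall_inP := Hc _ (mT c cl); apply; apply: mT.
Qed.

Fixpoint allb m : seq (seq bool) :=
  if m is m'.+1 then map (cons false) (allb m') ++ map (cons true) (allb m') else [:: [::]].

Lemma mem_cons_map (b b' : bool) c (X : seq (seq bool)) :
  (b :: c \in map (cons b') X) = (b == b') && (c \in X).
Proof.
apply/mapP/andP => [[y yX [-> ->]]|[/eqP-> cX]]; first by split.
by exists c.
Qed.

Lemma mem_allb m c : (c \in allb m) = (size c == m).
Proof.
elim: m c => [|m IH] [|b c] //=.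
- rewrite mem_cat. apply: negbTE. apply/norP; split; apply/mapP; by case.
- by rewrite mem_cat !mem_cons_map IH eqSS; case: b => /=; rewrite ?orbF.
Qed.

Definition ncodes := [seq c <- allb n | ~~ nth false c 0].

Fixpoint allt m (P : seq (seq bool) -> bool) (L : seq (seq bool)) : bool :=
  if m is m'.+1 then all (fun x => allt m' (fun t => P (x :: t)) L) L else P [::].

Lemma alltP m P L t : allt m P L -> size t = m -> all (mem L) t -> P t.
Proof.
elim: m P t => [|m IH] P [|x t] //= H [st] /andP[xL tL].
exact: IH (allP H x xL) st tL.
Qed.

Fixpoint combs m (L : seq (seq bool)) : seq (seq (seq bool)) :=
  match m, L with
  | 0, _ => [:: [::]]
  | _.+1, [::] => [::]
  | m'.+1, x :: L' => map (cons x) (combs m' L') ++ combs m L'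
  end.

Definition trees := [seq t <- combs (n - 3) ncodes | good t].

Definition canon_ok :=
  let TR := trees in
  allt (n - 3) (fun l => if good l then has (eqtree n l) TR else true) ncodes.

Lemma binary_canon (T : tree_t n) : canon_ok -> is_binary_tree T ->
  exists2 t, t \in trees & T = tree_of n t.
Proof.
move=> co /binary_codes [l [-> [sl gl]]].
have lin : all (mem ncodes) l.
  apply/allP=> c cl.
  case/and3P: gl => _ /allP/(_ c cl)/and4P[sc nc _ _] _.
  by rewrite /= mem_filter nc mem_allb.
have := alltP co sl lin; rewrite gl => /hasP [t tt et].
by exists t => //; apply: eqtree_tree.
Qed.

Definition ql := [seq q <- allb n | cnt n q == 4].

Definition split22 q c := (1 < cnt n (andl n c q)) && (1 < cnt n (andl n (negl n c) q)).

Definition qv (l : seq (seq bool)) q :=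
  let c := nth [::] l (find (split22 q) l) in
  if nth false (andl n c q) (index true q) then andl n c q else andl n (negl n c) q.

Definition sameind c p q :=
  ((andl n c q == p) && (andl n (negl n c) q == andl n q (negl n p))) ||
  ((andl n c q == andl n q (negl n p)) && (andl n (negl n c) q == p)).

Definition chk l q :=
  has (split22 q) l && all (fun c => if split22 q c then sameind c (qv l q) q else true) l.

Definition mkqs (Q P : {set 'I_n}) : split_t n := [set P; Q :\: P].

Lemma ntsplit2 (X Y Q : {set 'I_n}) : [disjoint X & Y] -> X :|: Y = Q ->
  is_nt_split Q [set X; Y] = (1 < #|X|) && (1 < #|Y|).
Proof.
move=> dXY UXY; apply/existsP/andP => [[A /existsP[B /and5P[/eqP E _ _ cA cB]]]|[cX cY]].
- have: X \in [set A; B] by rewrite -E set21.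
  have: Y \in [set A; B] by rewrite -E set22.
  by case/set2P=> ->; case/set2P=> ->.
- exists X; apply/existsP; exists Y; by rewrite eqxx dXY UXY eqxx cX cY.
Qed.

Lemma restrict_tree l q : chk l q ->
  restrict (tree_of n l) (S n q) = [set mkqs (S n q) (S n (qv l q))].
Proof.
case/andP=> /hasP[c0 c0l s0] /allP H.
set p := qv l q.
have G c : [set A :&: S n q | A in mk_split (S n c)] =
           [set S n (andl n c q); S n (andl n (negl n c) q)].
  by rewrite /mk_split imsetU1 imset_set1 !S_and S_neg.
have NT c : is_nt_split (S n q) [set S n (andl n c q); S n (andl n (negl n c) q)]
            = split22 q c.
  rewrite ntsplit2 ?card_S //.
  - rewrite -setI_eq0 !S_and S_neg; apply/eqP/setP=> x; rewrite !inE.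
    by case: (nth false c x); case: (nth false q x).
  - rewrite !S_and S_neg; apply/setP=> x; rewrite !inE.
    by case: (nth false c x); case: (nth false q x).
have SI c : c \in l -> split22 q c ->
    [set S n (andl n c q); S n (andl n (negl n c) q)] = mkqs (S n q) (S n p).
  move=> cl sc; have := H c cl; rewrite sc /sameind /mkqs.
  have E : S n q :\: S n p = S n (andl n q (negl n p)) by rewrite S_and S_neg setDE.
  rewrite E; case/orP=> /andP[/eqP-> /eqP->] //; exact: set2C.
apply/setP=> y; rewrite inE; apply/imsetP/eqP.
- case=> s; rewrite inE => /andP[sT nt] ->.
  rewrite inE in sT; case/mapP: sT => c cl es.
  rewrite es G NT in nt; rewrite es G; exact: SI.
- move=> ->; exists (mk_split (S n c0)).
    rewrite inE; apply/andP; split.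
      by rewrite inE; apply: (map_f (fun c => mk_split (S n c))).
    by rewrite G NT.
  by rewrite G SI.
Qed.

Definition Dq (x : seq bool * seq bool) :=
  [&& size x.1 == n, size x.2 == n, andl n x.2 x.1 == x.2 & nth false x.2 (index true x.1)].
Definition Hq (x : seq bool * seq bool) : tree_t n := [set mkqs (S n x.1) (S n x.2)].
Definition Pl l := [seq (q, qv l q) | q <- ql].

Lemma quartets_perm : uniq ql -> perm_eq (quartets n) (map (S n) ql).
Proof.
move=> uq; apply: uniq_perm; first exact: enum_uniq.
  rewrite map_inj_in_uniq // => x y; rewrite !mem_filter !mem_allb.
  by move=> /andP[_ /eqP sx] /andP[_ /eqP sy]; apply: S_inj.
move=> Q; rewrite mem_enum inE; apply/idP/mapP.
- move=> /eqP cQ; exists (enc Q); last by rewrite S_enc.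
  by rewrite mem_filter mem_allb size_enc eqxx -card_S S_enc cQ eqxx.
- by case=> q; rewrite mem_filter => /andP[/eqP cq _] ->; rewrite card_S cq.
Qed.

Lemma Hq_inj : {in Dq &, injective Hq}.
Proof.
move=> [q p] [q' p'] /and4P[/= /eqP sq /eqP sp ap ep] /and4P[/= /eqP sq' /eqP sp' ap' ep'].
rewrite /Hq /mkqs /= => /set1_inj E.
have U a b : andl n b a == b -> S n b :|: (S n a :\: S n b) = S n a.
  move=> /eqP ab; rewrite -ab S_and; apply/setP=> x; rewrite !inE.
  by case: (nth false b x); case: (nth false a x).
have qq : q = q'.
  apply: (@S_inj n) => //; rewrite -(U _ _ ap) -(U _ _ ap'); exact: set2_union.
subst q'.
have he : index true q < n.
  rewrite -sp ltnNge; apply/negP => le; by rewrite nth_default in ep.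
have o1 : Ordinal he \in S n p by rewrite inE.
have o2 : Ordinal he \in S n p' by rewrite inE.
have : S n p \in [set S n p'; S n q :\: S n p'] by rewrite -E set21.
case/set2P=> [pp | pd].
  by rewrite (S_inj sp sp' pp).
by move: o1 o2; rewrite pd !inE => /andP[/negP h _] h2.
Qed.

Lemma cntP l q x : uniq ql -> q \in ql -> count_mem (q, x) (Pl l) = (qv l q == x).
Proof.
move=> uq qin; rewrite count_map.
transitivity (count (fun q' => (q' == q) && (qv l q == x)) ql).
  apply: eq_count => q' /=; rewrite xpair_eqE; by case: eqP => // ->.
case: (qv l q == x) => /=.
- under eq_count do rewrite andbT. by rewrite count_uniq_mem // qin.
- by rewrite (eq_count (a2 := pred0)) ?count_pred0 // => y; rewrite andbF.
Qed.

Lemma qms l1 l2 : uniq ql -> (forall q, q \in ql -> chk l1 q && chk l2 q) ->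
  perm_eq (quartet_multiset (tree_of n l1) (tree_of n l2)) (map Hq (Pl l1 ++ Pl l2)).
Proof.
move=> uq hc; rewrite /quartet_multiset map_cat.
have qp := quartets_perm uq.
apply: perm_cat.
- apply: perm_trans (perm_map _ qp) _; rewrite -map_comp /Pl -map_comp.
  have -> : map (restrict (tree_of n l1) \o S n) ql = map (Hq \o fun q => (q, qv l1 q)) ql.
    apply/eq_in_map => q qin; rewrite /= restrict_tree //.
    by case/andP: (hc q qin).
  exact: perm_refl.
- apply: perm_trans (perm_map _ qp) _; rewrite -map_comp /Pl -map_comp.
  have -> : map (restrict (tree_of n l2) \o S n) ql = map (Hq \o fun q => (q, qv l2 q)) ql.
    apply/eq_in_map => q qin; rewrite /= restrict_tree //.
    by case/andP: (hc q qin).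
  exact: perm_refl.
Qed.

Definition checks :=
  [&& canon_ok, uniq ql &
      all (fun t => all (fun q => chk t q && Dq (q, qv t q)) ql) trees].

Definition search (Cn : seq (seq bool) -> seq (seq bool) -> seq (seq bool) -> seq (seq bool) -> bool) :=
  let TQ := [seq (t, map (qv t) ql) | t <- trees] in
  all (fun x1 => all (fun x2 => all (fun x3 =>
    if ok3 x1.2 x2.2 x3.2 then
      let w := v4f x1.2 x2.2 x3.2 in
      all (fun x4 => if eqvl x4.2 w then Cn x1.1 x2.1 x3.1 x4.1 else true) TQ
    else true) TQ) TQ) TQ.

Lemma reduce Cn : checks -> search Cn ->
  forall T1 T2 T3 T4 : tree_t n,
  is_binary_tree T1 -> is_binary_tree T2 -> is_binary_tree T3 -> is_binary_tree T4 ->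
  quartet_matched T1 T2 T3 T4 ->
  exists t1 t2 t3 t4, [/\ T1 = tree_of n t1, T2 = tree_of n t2, T3 = tree_of n t3,
                          T4 = tree_of n t4 & Cn t1 t2 t3 t4].
Proof.
case/and3P=> co uq /allP ct sr T1 T2 T3 T4 b1 b2 b3 b4.
have [t1 t1T ->] := binary_canon co b1.
have [t2 t2T ->] := binary_canon co b2.
have [t3 t3T ->] := binary_canon co b3.
have [t4 t4T ->] := binary_canon co b4.
move=> M.
have hc t : t \in trees -> forall q, q \in ql -> chk t q.
  by move=> tT q qin; have /andP[] := allP (ct t tT) q qin.
have hD t : t \in trees -> all Dq (Pl t).
  move=> tT; rewrite all_map; apply/allP=> q qin.
  by have /andP[] := allP (ct t tT) q qin.
have P12 := qms uq (fun q qin => introT andP (conj (hc _ t1T q qin) (hc _ t2T q qin))).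
have P34 := qms uq (fun q qin => introT andP (conj (hc _ t3T q qin) (hc _ t4T q qin))).
have PE : perm_eq (Pl t1 ++ Pl t2) (Pl t3 ++ Pl t4).
  apply: (perm_inj_in Hq_inj); rewrite ?all_cat ?hD //.
  rewrite /quartet_matched in M.
  rewrite perm_sym in P12.
  exact: perm_trans P12 (perm_trans M P34).
have pw q : q \in ql -> qv t3 q \in [:: qv t1 q; qv t2 q] /\
    qv t4 q = (if qv t3 q == qv t1 q then qv t2 q else qv t1 q).
  move=> qin; apply: two_multiset => x.
  have := (seq.permP PE) (pred1 (q, x)).
  by rewrite !count_cat !cntP.
exists t1, t2, t3, t4; split=> //.
have mTQ t : t \in trees -> (t, map (qv t) ql) \in [seq (t, map (qv t) ql) | t <- trees].
  by move=> tT; apply: (map_f (fun t => (t, map (qv t) ql))).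
have := allP (allP (allP sr _ (mTQ _ t1T)) _ (mTQ _ t2T)) _ (mTQ _ t3T).
rewrite /= ok3_map; last by move=> q qin; case: (pw q qin).
move=> /allP /(_ _ (mTQ _ t4T)) /=.
rewrite v4f_map.
have -> : map (qv t4) ql = map (fun q => if qv t3 q == qv t1 q then qv t2 q else qv t1 q) ql.
  by apply/eq_in_map => q qin; case: (pw q qin).
by rewrite eqvlE eqxx.
Qed.
End Struct.

Definition plab (f : seq nat) (c : seq bool) := mkseq (fun j => nth false c (index j f)) (size f).

Section Relabel.
Variable m : nat.
Variable f : seq nat.
Hypothesis hf : perm_eq f (iota 0 m.+1).

Lemma size_f : size f = m.+1.
Proof. by rewrite (perm_size hf) size_iota. Qed.
Lemma uniq_f : uniq f.
Proof. by rewrite (perm_uniq hf) iota_uniq. Qed.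
Lemma mem_f x : (x \in f) = (x < m.+1).
Proof. by rewrite (perm_mem hf) mem_iota. Qed.
Lemma nth_f_lt i : i < m.+1 -> nth 0 f i < m.+1.
Proof. by move=> lt; rewrite -mem_f mem_nth // size_f. Qed.

Definition gf (i : 'I_m.+1) : 'I_m.+1 := inord (nth 0 f i).
Lemma gf_inj : injective gf.
Proof.
move=> i j /(congr1 val); rewrite /gf /= !inordK ?nth_f_lt //.
move/eqP; rewrite nth_uniq ?size_f ?uniq_f // => /eqP; exact: val_inj.
Qed.
Definition sf : {perm 'I_m.+1} := perm gf_inj.

Lemma imS c : sf @: S m.+1 c = S m.+1 (plab f c).
Proof.
apply/setP=> j; rewrite inE /plab nth_mkseq ?size_f //.
apply/imsetP/idP.
- case=> i; rewrite inE => ci ->.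
  by rewrite permE /gf inordK ?nth_f_lt // index_uniq ?size_f ?uniq_f.
- move=> h.
  have lt0 : index (val j) f < size f by rewrite index_mem mem_f ltn_ord.
  have lt : index (val j) f < m.+1 := leq_trans lt0 (eq_leq size_f).
  exists (Ordinal lt); first by rewrite inE.
  by apply: val_inj; rewrite permE /gf /= nth_index ?inordK // mem_f.
Qed.

Lemma plab_neg c : S m.+1 (plab f (negl m.+1 c)) = ~: S m.+1 (plab f c).
Proof.
apply/setP=> j; rewrite !inE /plab !nth_mkseq ?size_f //.
have lt0 : index (val j) f < size f by rewrite index_mem mem_f ltn_ord.
exact: leq_trans lt0 (eq_leq size_f).
Qed.

Lemma relabel_tree t : relabel sf (tree_of m.+1 t) = tree_of m.+1 (map (plab f) t).
Proof.
have R (c : seq bool) : [set sf @: A | A : {set 'I_m.+1} in mk_split (S m.+1 c)] = mk_split (S m.+1 (plab f c)).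
  by rewrite /mk_split imsetU1 imset_set1 -S_neg !imS plab_neg.
apply/setP=> y; rewrite inE; apply/imsetP/mapP.
- case=> sp; rewrite inE => /mapP [c ct ->] ->.
  exists (plab f c); first exact: map_f.
  by rewrite R.
- case=> d /mapP [c ct ->] ->.
  exists (mk_split (S m.+1 c)); last by rewrite R.
  by rewrite inE; apply: (map_f (fun c => mk_split (S m.+1 c))).
Qed.
End Relabel.

Definition upb n (a b c d : seq (seq bool)) :=
  (eqtree n a c && eqtree n b d) || (eqtree n a d && eqtree n b c).

Lemma upb_tree n a b c d : upb n a b c d ->
  upair_eq (tree_of n a) (tree_of n b) (tree_of n c) (tree_of n d).
Proof.
by case/orP=> /andP[/eqtree_tree-> /eqtree_tree->]; [left|right].
Qed.

Definition C5 (t1 t2 t3 t4 : seq (seq bool)) :=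
  ((t1 == t3) && (t2 == t4)) || ((t1 == t4) && (t2 == t3)).

Definition c12 := [:: true; true; false; false; false; false].
Definition c13 := [:: true; false; true; false; false; false].
Definition c123 := [:: true; true; true; false; false; false].
Definition c1234 := [:: true; true; true; true; false; false].
Definition c1235 := [:: true; true; true; false; true; false].
Definition R1 := [:: c12; c123; c1234].
Definition R2 := [:: c13; c123; c1235].
Definition R3 := [:: c13; c123; c1234].
Definition R4 := [:: c12; c123; c1235].

Definition cfgok (f : seq nat) (t1 t2 t3 t4 : seq (seq bool)) :=
  let r := map (plab f) in
  let a := r t1 in
  if eqtree 6 a R1 || eqtree 6 a R2 || eqtree 6 a R3 || eqtree 6 a R4 then
  (upb 6 (r t1) (r t2) R1 R2 && upb 6 (r t3) (r t4) R3 R4) ||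
  (upb 6 (r t1) (r t2) R3 R4 && upb 6 (r t3) (r t4) R1 R2)
  else false.

Definition C6 (t1 t2 t3 t4 : seq (seq bool)) :=
  if C5 t1 t2 t3 t4 then true
  else hasl (fun f => cfgok f t1 t2 t3 t4) (permutations (iota 0 6)).

Lemma e12 : [set L6 1; L6 2] = S 6 c12.
Proof. apply/setP => i; rewrite !inE /L6 -!val_eqE /= !inordK //. by case: i => [[|[|[|[|[|[|k]]]]]] Hi]. Qed.
Lemma e13 : [set L6 1; L6 3] = S 6 c13.
Proof. apply/setP => i; rewrite !inE /L6 -!val_eqE /= !inordK //. by case: i => [[|[|[|[|[|[|k]]]]]] Hi]. Qed.
Lemma e123 : [set L6 1; L6 2; L6 3] = S 6 c123.
Proof. apply/setP => i; rewrite !inE /L6 -!val_eqE /= !inordK //. by case: i => [[|[|[|[|[|[|k]]]]]] Hi]. Qed.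
Lemma e1234 : [set L6 1; L6 2; L6 3; L6 4] = S 6 c1234.
Proof. apply/setP => i; rewrite !inE /L6 -!val_eqE /= !inordK //. by case: i => [[|[|[|[|[|[|k]]]]]] Hi]. Qed.
Lemma e1235 : [set L6 1; L6 2; L6 3; L6 5] = S 6 c1235.
Proof. apply/setP => i; rewrite !inE /L6 -!val_eqE /= !inordK //. by case: i => [[|[|[|[|[|[|k]]]]]] Hi]. Qed.

Lemma set3_tree (a b c : seq bool) :
  [set mk_split (S 6 a); mk_split (S 6 b); mk_split (S 6 c)] = tree_of 6 [:: a; b; c].
Proof. by apply/setP => s; rewrite !inE ?orbF orbA. Qed.

Lemma T1E : T1_6 = tree_of 6 R1. Proof. by rewrite /T1_6 e1234 e123 e12 set3_tree. Qed.
Lemma T2E : T2_6 = tree_of 6 R2. Proof. by rewrite /T2_6 e1235 e123 e13 set3_tree. Qed.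
Lemma T3E : T3_6 = tree_of 6 R3. Proof. by rewrite /T3_6 e1234 e123 e13 set3_tree. Qed.
Lemma T4E : T4_6 = tree_of 6 R4. Proof. by rewrite /T4_6 e1235 e123 e12 set3_tree. Qed.

Lemma checks5 : checks 5. Proof. vm_cast_no_check (erefl true). Qed.
Lemma search5 : search 5 C5. Proof. vm_cast_no_check (erefl true). Qed.
Lemma checks6 : checks 6. Proof. vm_cast_no_check (erefl true). Qed.
Lemma search6 : search 6 C6. Proof. vm_cast_no_check (erefl true). Qed.

Theorem proposition4 :
  (forall T1 T2 T3 T4 : tree_t 5,
     is_binary_tree T1 -> is_binary_tree T2 ->
     is_binary_tree T3 -> is_binary_tree T4 ->
     quartet_matched T1 T2 T3 T4 -> upair_eq T1 T2 T3 T4)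
  /\
  (forall T1 T2 T3 T4 : tree_t 6,
     is_binary_tree T1 -> is_binary_tree T2 ->
     is_binary_tree T3 -> is_binary_tree T4 ->
     quartet_matched T1 T2 T3 T4 -> ~ upair_eq T1 T2 T3 T4 ->
     exists s : {perm 'I_6},
       same_config (relabel s T1) (relabel s T2) (relabel s T3) (relabel s T4)
                   T1_6 T2_6 T3_6 T4_6).
Proof.
split.
- move=> T1 T2 T3 T4 b1 b2 b3 b4 M.
  have [t1 [t2 [t3 [t4 [-> -> -> -> C]]]]] := reduce checks5 search5 b1 b2 b3 b4 M.
  by case/orP: C => /andP[/eqP-> /eqP->]; [left|right].
- move=> T1 T2 T3 T4 b1 b2 b3 b4 M nU.
  have [t1 [t2 [t3 [t4 [E1 E2 E3 E4 C]]]]] := reduce checks6 search6 b1 b2 b3 b4 M.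
  subst T1 T2 T3 T4.
  move: C; rewrite /C6; case: ifP => [h _|_].
    exfalso; apply: nU.
    by case/orP: h => /andP[/eqP-> /eqP->]; [left|right].
  rewrite haslE => /hasP [f fP cf].
  rewrite mem_permutations in fP.
  move: cf; rewrite /cfgok; case: ifP => [_ cf|//]; move: cf.
  move=> cf; exists (sf fP).
  rewrite !(relabel_tree fP) T1E T2E T3E T4E /same_config.
  by case/orP: cf => /andP [/upb_tree h1 /upb_tree h2]; [left|right]; split.
Qed.
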